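(* Let $H$, $L$ be as in the context with $L\mid Z$, let $\omega_{LB}=\lceil\omega(H)/L\rceil$, and let $\mathcal T_0=\{x\in[MZ): x\equiv 0\pmod L\}$ (equivalently $\mathcal T_0=\bigcup_{m\in[M)}\{mZ+((rL)\bmod Z):r\in\mathbb Z\}$). Then $(1,\mathcal T_0)$ is an optimal solution with $\omega(H_{\mathcal T_0})=\omega_{LB}$ if and only if $|\{x\in\mathcal N(v_j): x\equiv 0\pmod L\}|\le\omega_{LB}$ for all $j\in[NZ)$, with equality for some $j$.
   Context: Notation: $[n)=\{0,1,\dots,n-1\}$. Let $M,N,Z$ be positive integers and let $H$ be a binary $MZ\times NZ$ matrix made of $M\times N$ blocks, each a $Z\times Z$ circulant; assume $H$ has no zero row and no two identical rows. For $j\in[NZ)$, $\mathcal N(v_j)=\{i\in[MZ): H[i][j]=1\}$ (the rows with a $1$ in column $j$). For $\mathcal A\subseteq[MZ)$, $H_{\mathcal A}$ is the submatrix of rows indexed by $\mathcal A$; $\omega(A)$ is the maximum Hamming weight of a column of $A$. For $i\in[MZ)$ and integer $s$, $\pi^s(i)=Z\lfloor i/Z\rfloor+((i+s)\bmod Z)$ and $\pi^s(\mathcal T)=\{\pi^s(x):x\in\mathcal T\}$. Fix an integer $L>1$. A pair $(S,\mathcal T_0)$ ($S$ a positive integer, $\mathcal T_0\subseteq[MZ)$) is a feasible solution if, with $\mathcal T_l=\pi^{lS}(\mathcal T_0)$ for $l\in[L)$, the sets $\mathcal T_0,\dots,\mathcal T_{L-1}$ are pairwise disjoint with union $[MZ)$.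 An optimal solution is a feasible solution minimizing $\omega(H_{\mathcal T_0})$ over all feasible solutions. *)

(* Defs.v *)
From mathcomp Require Import all_boot all_order all_algebra.
Set Implicit Arguments. Unset Strict Implicit. Unset Printing Implicit Defensive.

(* Cyclic shift inside Z-blocks: pi^s(i) = Z*floor(i/Z) + ((i+s) mod Z),
   on indices in [n) (n = M*Z or N*Z).  The fallback of insubd is never used
   when Z > 0 and Z %| n. *)
Definition blk_shift (n Z s : nat) (i : 'I_n) : 'I_n :=
  insubd i (Z * (i %/ Z) + (i + s) %% Z).

Definition block_circulant (M N Z : nat) (H : 'M[bool]_(M * Z, N * Z)) :=
  forall i j, H i j = H (blk_shift Z 1 i) (blk_shift Z 1 j).

Definition omega_sub (m n : nat) (H : 'M[bool]_(m, n)) (A : {set 'I_m}) : nat :=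
  \max_(j < n) #|[set i in A | H i j]|.

Definition omega (m n : nat) (H : 'M[bool]_(m, n)) : nat := omega_sub H setT.

Definition Tl (m Z S l : nat) (T0 : {set 'I_m}) : {set 'I_m} :=
  blk_shift Z (l * S) @: T0.

Definition feasible (m Z L S : nat) (T0 : {set 'I_m}) : Prop :=
  0 < S /\
  (forall l1 l2, l1 < L -> l2 < L -> l1 != l2 ->
      [disjoint Tl Z S l1 T0 & Tl Z S l2 T0]) /\
  \bigcup_(l < L) Tl Z S l T0 = setT.

Definition optimal (m n Z L : nat) (H : 'M[bool]_(m, n)) S (T0 : {set 'I_m}) : Prop :=
  feasible Z L S T0 /\
  forall S' (T' : {set 'I_m}), feasible Z L S' T' -> omega_sub H T0 <= omega_sub H T'.

Definition ceil_div (a L : nat) : nat := (a + L.-1) %/ L.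

(* Main.v *)
Require Import Defs.
From mathcomp Require Import all_boot all_order all_algebra.
From mathcomp Require Import zify.
Set Implicit Arguments. Unset Strict Implicit.

Lemma bound_nat n Z s i : 0 < Z -> Z %| n -> i < n -> Z * (i %/ Z) + (i + s) %% Z < n.
Proof.
move=> Zp /dvdnP[k ->] hi.
have hq : i %/ Z < k by rewrite ltn_divLR.
have hr : (i + s) %% Z < Z by rewrite ltn_mod.
have : (i %/ Z).+1 * Z <= k * Z by rewrite leq_mul2r hq orbT.
rewrite mulSn; lia.
Qed.

Section S.
Variables (n Z : nat) (Zpos : 0 < Z) (Zn : Z %| n).

Lemma sh_val s (i : 'I_n) : val (blk_shift Z s i) = Z * (i %/ Z) + (i + s) %% Z.
Proof. by rewrite /blk_shift val_insubd bound_nat. Qed.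

Lemma sh_add s t (i : 'I_n) : blk_shift Z s (blk_shift Z t i) = blk_shift Z (t + s) i.
Proof.
apply: val_inj; rewrite !sh_val.
have hr : (i + t) %% Z < Z by rewrite ltn_mod.
rewrite [Z * (i %/ Z)]mulnC divnMDl // (divn_small hr) addn0 mulnC; congr (_ + _).
by rewrite -addnA modnMDl modnDml addnA.
Qed.

Lemma sh_mul s (i : 'I_n) : Z %| s -> blk_shift Z s i = i.
Proof.
move=> /dvdnP[k ->]; apply: val_inj; rewrite sh_val [i + _]addnC modnMDl mulnC.
by rewrite -divn_eq.
Qed.

Lemma sh0 (i : 'I_n) : blk_shift Z 0 i = i.
Proof. by rewrite sh_mul ?dvdn0. Qed.

Definition inv_sh s := Z - s %% Z.

Lemma sh_inv s (i : 'I_n) : blk_shift Z (inv_sh s) (blk_shift Z s i) = i.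
Proof.
rewrite sh_add sh_mul //; apply/dvdnP; exists (s %/ Z).+1.
rewrite /inv_sh; have := ltn_pmod s Zpos; have := divn_eq s Z; lia.
Qed.

Lemma sh_inv' s (i : 'I_n) : blk_shift Z s (blk_shift Z (inv_sh s) i) = i.
Proof.
rewrite sh_add sh_mul //; apply/dvdnP; exists (s %/ Z).+1.
rewrite /inv_sh; have := ltn_pmod s Zpos; have := divn_eq s Z; lia.
Qed.

Lemma sh_inj s : injective (blk_shift (n:=n) Z s).
Proof. exact: can_inj (sh_inv s). Qed.

Lemma sh_modL L s (i : 'I_n) : L %| Z -> val (blk_shift Z s i) %% L = (i + s) %% L.
Proof.
move=> LZ; rewrite sh_val -modnDm.
have -> : Z * (i %/ Z) %% L = 0 by apply/eqP; rewrite -/(dvdn _ _) dvdn_mulr.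
by rewrite add0n modn_mod (modn_dvdm _ LZ).
Qed.
End S.

Lemma card_bigcup_leq (T I : finType) (P : pred I) (F : I -> {set T}) :
  #|\bigcup_(i | P i) F i| <= \sum_(i | P i) #|F i|.
Proof.
apply: (big_ind2 (fun (A : {set T}) (k : nat) => #|A| <= k)).
- by rewrite cards0.
- move=> A a B b hA hB; apply: leq_trans (leq_card_setU A B).1 _.
  exact: leq_add.
- by [].
Qed.

Section Main.
Variables (M N Z : nat) (H : 'M[bool]_(M * Z, N * Z)).
Hypotheses (Zp : 0 < Z) (circ : block_circulant H).

Let ZM : Z %| M * Z. Proof. exact: dvdn_mull. Qed.
Let ZN : Z %| N * Z. Proof. exact: dvdn_mull. Qed.

Lemma circ_iter k i j : H (blk_shift Z k i) (blk_shift Z k j) = H i j.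
Proof.
elim: k => [|k IH]; first by rewrite !sh0.
rewrite -addn1 -!(sh_add Zp) //.
by rewrite -circ.
Qed.

Lemma H_move s i j : H (blk_shift Z s i) j = H i (blk_shift Z (inv_sh Z s) j).
Proof.
by rewrite -(circ_iter (inv_sh Z s)) (sh_inv Zp ZM).
Qed.

Lemma card_shift s (A : {set 'I_(M * Z)}) j :
  #|[set i in blk_shift Z s @: A | H i j]| =
  #|[set i in A | H i (blk_shift Z (inv_sh Z s) j)]|.
Proof.
have -> : [set i in blk_shift Z s @: A | H i j] =
          blk_shift Z s @: [set i in A | H (blk_shift Z s i) j].
  apply/setP => x; rewrite inE; apply/andP/imsetP.
  - by case=> /imsetP[a Ha ->] Hx; exists a; rewrite // inE Ha.
  - case=> a; rewrite inE => /andP[Ha Hh] ->; split => //.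
    exact: imset_f.
rewrite card_imset; last exact: (sh_inj Zp ZM).
by apply: eq_card => x; rewrite !inE H_move.
Qed.

Lemma lower_bound L S T : feasible Z L S T -> omega H <= L * omega_sub H T.
Proof.
case=> _ [_ cov].
apply/bigmax_leqP => j _.
apply: (@leq_trans (\sum_(l < L) #|[set i in Tl Z S l T | H i j]|)).
  apply: leq_trans (card_bigcup_leq _ _); apply: subset_leq_card.
  apply/subsetP => x; rewrite inE => /andP[_ Hx].
  have := in_setT x; rewrite -cov => /bigcupP[l _ Hl].
  by apply/bigcupP; exists l => //; rewrite inE Hl.
apply: (@leq_trans (\sum_(l < L) omega_sub H T)).
  apply: leq_sum => l _; rewrite /Tl card_shift.
  exact: (leq_bigmax (F := fun j => #|[set i in T | H i j]|)).
by rewrite sum_nat_const card_ord.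
Qed.
End Main.

Lemma ceil_le a L w : 0 < L -> a <= L * w -> ceil_div a L <= w.
Proof.
move=> Lp h; rewrite /ceil_div -ltnS ltn_divLR //; lia.
Qed.

Lemma feas_T0 M Z L : 0 < Z -> 1 < L -> L %| Z ->
  feasible Z L 1 [set x : 'I_(M * Z) | L %| x].
Proof.
move=> Zp L1 LZ.
have ZM : Z %| M * Z by exact: dvdn_mull.
have Lp : 0 < L by apply: ltnW.
split => //; split.
- move=> l1 l2 h1 h2 hne.
  rewrite -setI_eq0; apply/eqP/setP => x; rewrite !inE; apply/negbTE.
  apply/negP => /andP[/imsetP[a Ha ->] /imsetP[b Hb E]].
  have := congr1 (fun y : 'I__ => val y %% L) E; rewrite /= !(sh_modL Zp ZM) //.
  rewrite inE /dvdn in Ha; rewrite inE /dvdn in Hb.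
  rewrite -modnDml (eqP Ha) -[(b + _) %% L]modnDml (eqP Hb) !add0n !muln1.
  rewrite !modn_small // => e; by rewrite e eqxx in hne.
- apply/setP => x; rewrite inE; apply/bigcupP.
  exists (Ordinal (ltn_pmod x Lp)) => //; rewrite /Tl.
  apply/imsetP; exists (blk_shift Z (inv_sh Z (x %% L * 1)) x); last by rewrite (sh_inv' Zp ZM).
  rewrite inE /dvdn (sh_modL Zp ZM) //.
  case/dvdnP: LZ => c ec.
  have hl := ltn_pmod x Lp.
  have LZ' : L <= Z by rewrite ec; case: c ec Zp => [->//|c _ _]; rewrite mulSn; lia.
  have hm : (x %% L * 1) %% Z = x %% L by rewrite muln1 modn_small //; lia.
  have e : x + inv_sh Z (x %% L * 1) = (x %/ L + c) * L.
    rewrite /inv_sh hm; have := divn_eq x L; lia.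
  by rewrite e modnMl.
Qed.

Theorem lemma3 (M N Z L : nat) (H : 'M[bool]_(M * Z, N * Z)) :
  0 < M -> 0 < N -> 0 < Z -> 1 < L -> L %| Z ->
  block_circulant H ->
  (forall i : 'I_(M * Z), exists j : 'I_(N * Z), H i j) ->
  (forall i i' : 'I_(M * Z), (forall j, H i j = H i' j) -> i = i') ->
  let wLB := ceil_div (omega H) L in
  let T0 := [set x : 'I_(M * Z) | L %| x] in
  (optimal Z L H 1 T0 /\ omega_sub H T0 = wLB) <->
  ((forall j : 'I_(N * Z), #|[set x : 'I_(M * Z) | H x j && (L %| x)]| <= wLB) /\
   exists j : 'I_(N * Z), #|[set x : 'I_(M * Z) | H x j && (L %| x)]| = wLB).
Proof.
move=> Mp Np Zp L1 LZ circ _ _ wLB T0.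
have Lp : 0 < L by apply: ltnW.
have key : forall j, #|[set i in T0 | H i j]| = #|[set x | H x j && (L %| x)]|.
  by move=> j; apply: eq_card => x; rewrite !inE andbC.
have feas : feasible Z L 1 T0 by exact: feas_T0.
have lb : forall S T, feasible Z L S T -> wLB <= omega_sub H T.
  by move=> S T fT; apply: ceil_le => //; exact: (lower_bound Zp circ fT).
split.
- case=> _ Hom; split.
    move=> j; rewrite -key -Hom.
    exact: (leq_bigmax (F := fun j => #|[set i in T0 | H i j]|)).
  have cp : 0 < #|'I_(N * Z)| by rewrite card_ord muln_gt0 Np.
  have [j0 Hj] := eq_bigmax (fun j => #|[set i in T0 | H i j]|) cp.
  by exists j0; rewrite -key -Hom /omega_sub Hj.
- case=> Hle [j0 Hj0].
  have Hom : omega_sub H T0 = wLB.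
    apply/eqP; rewrite eqn_leq; apply/andP; split.
      by apply/bigmax_leqP => j _; rewrite key; exact: Hle.
    rewrite -Hj0 -key.
    exact: (leq_bigmax (F := fun j => #|[set i in T0 | H i j]|)).
  split => //; split => // S T fT; rewrite Hom. apply: (lb S T fT).
Qed.
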